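(* Let $n \geq 0$ be an integer, let $X$ and $A_1, \ldots, A_n$ be finite sets with $X$ nonempty (and each $A_i$ nonempty), and for each $1 \leq i \leq n$ let $f_i : X \to A_i$ be a function. Then $$\# \{ (x_0, \ldots, x_n) \in X^{n+1} : f_i(x_{i-1}) = f_i(x_i) \text{ for all } 1 \leq i \leq n \} \geq \frac{(\# X)^{n+1}}{\prod_{i=1}^n \# A_i}.$$
   Context: $\# S$ denotes the cardinality of a finite set $S$; an empty product equals $1$. *)

(* Defs.v *)
From mathcomp Require Import all_boot all_order all_algebra.
Set Implicit Arguments. Unset Strict Implicit. Unset Printing Implicit Defensive.

(* Tuples (x_0,...,x_n) in X^{n+1} with f_i(x_{i-1}) = f_i(x_i) for 1<=i<=n.
   Indices are shifted: i : 'I_n stands for i+1; x_{i} is x (widen_ord _ i),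
   x_{i+1} is x (lift ord0 i). *)
Definition chain_tuples (X : finType) (n : nat) (A : 'I_n -> finType)
  (f : forall i : 'I_n, X -> A i) : {set {ffun 'I_n.+1 -> X}} :=
  [set x : {ffun 'I_n.+1 -> X} |
     [forall i : 'I_n, f i (x (widen_ord (leqnSn n) i)) == f i (x (lift ord0 i))]].

(* Main.v *)
Require Import Defs.
From mathcomp Require Import all_boot all_order all_algebra zify.
Import Order.TTheory GRing.Theory Num.Theory.

Set Implicit Arguments. Unset Strict Implicit.
Section Chains.

Variable X : finType.
Variable G : nat -> X -> X -> bool.

Definition chainP k (x : {ffun 'I_k.+1 -> X}) :=
  [forall i : 'I_k, G i (x (inord i)) (x (inord i.+1))].

Definition cnt k (y : X) : nat :=
  (\sum_(x : {ffun 'I_k.+1 -> X}) ((x (inord k) == y) && chainP x))%N.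

Lemma sum_eq1 (I : finType) (w : I) (b : I -> bool) :
  (\sum_(z : I) ((z == w) && b z) = b w)%N.
Proof.
rewrite (bigD1 w) //= eqxx big1 ?addn0 // => z /negbTE ->; done.
Qed.

Lemma cnt0 y : cnt 0 y = 1%N.
Proof.
rewrite /cnt (bigD1 [ffun => y]) //= big1 ?addn0.
  by rewrite ffunE eqxx; have -> : @chainP 0 [ffun => y] by rewrite /chainP; apply/forallP => -[].
move=> x Hx; case: eqP => //= Hy.
move/eqP: Hx; case; apply/ffunP => i; rewrite ffunE -Hy.
by congr (x _); apply/val_inj; rewrite /= inordK //; case: i => -[].
Qed.

Definition ext k (p : {ffun 'I_k.+1 -> X} * X) : {ffun 'I_k.+2 -> X} :=
  [ffun i : 'I_k.+2 => if (i < k.+1)%N then p.1 (inord i) else p.2].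
Definition res k (x : {ffun 'I_k.+2 -> X}) : {ffun 'I_k.+1 -> X} * X :=
  ([ffun i : 'I_k.+1 => x (inord i)], x (inord k.+1)).

Lemma ext_lo k (p : {ffun 'I_k.+1 -> X} * X) j : (j <= k)%N -> ext p (inord j) = p.1 (inord j).
Proof. by move=> hj; rewrite ffunE inordK ?ltnS ?hj // ltnW. Qed.
Lemma ext_hi k (p : {ffun 'I_k.+1 -> X} * X) : ext p (inord k.+1) = p.2 :> X.
Proof. by rewrite ffunE inordK // ltnn. Qed.

Lemma resK k : cancel (@res k) (@ext k).
Proof.
move=> x; apply/ffunP => i; rewrite ffunE /=.
case: ifP => hi; first by rewrite ffunE inordK // inord_val.
congr (x _); apply/val_inj; rewrite /= inordK //.
by have := ltn_ord i; move: hi; case: i => /= i _; lia.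
Qed.

Lemma extK k : cancel (@ext k) (@res k).
Proof.
move=> [x z]; rewrite /res ext_hi; congr (_, _).
apply/ffunP => i; rewrite ffunE ext_lo; first by rewrite inord_val.
by rewrite -ltnS.
Qed.

Lemma chain_ext k (x : {ffun 'I_k.+1 -> X}) z :
  chainP (ext (x, z)) = chainP x && G k (x (inord k)) z.
Proof.
rewrite /chainP -!(big_andE predT) /= big_ord_recr /=.
rewrite ext_lo // ext_hi /=; congr (_ && _).
apply: eq_bigr => i _.
have hi := ltn_ord i.
rewrite (ext_lo (x, z) (j := i)); last exact: ltnW.
by rewrite (ext_lo (x, z) (j := i.+1)).
Qed.

Lemma cntS k y : cnt k.+1 y = (\sum_(z | G k z y) cnt k z)%N.
Proof.
rewrite /cnt (reindex (@ext k)) /=; last by exists (@res k) => ? _; [apply: extK | apply: resK].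
transitivity (\sum_(x : {ffun 'I_k.+1 -> X}) \sum_(z : X)
   ((ext (x,z) (inord k.+1) == y) && chainP (ext (x,z))))%N.
  by rewrite pair_bigA; apply: eq_bigr => -[].
transitivity (\sum_(x : {ffun 'I_k.+1 -> X}) (chainP x && G k (x (inord k)) y))%N.
  apply: eq_bigr => x _.
  rewrite -(sum_eq1 y (fun z => chainP x && G k (x (inord k)) z)).
  by apply: eq_bigr => z _; rewrite ext_hi chain_ext.
rewrite big_mkcond exchange_big /=.
apply: eq_bigr => x _.
rewrite andbC -[(G k _ y && _ : nat)](sum_eq1 (x (inord k)) (fun z => G k z y && chainP x)) /=.
rewrite [RHS]big_mkcond; apply: eq_bigr => z _; rewrite [x _ == _]eq_sym.
by case: (G k z y); case: (z == x (inord k)); case: (chainP x).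
Qed.

End Chains.

Local Open Scope ring_scope.
Section Ineq.
Variables (X B : finType) (h : X -> B).

Definition mf (a : B) : nat := #|[pred z | h z == a]|.

Lemma AGM_le (I : finType) (A : {pred I}) (E : I -> rat) :
  {in A, forall i, 0 <= E i} ->
  \prod_(i in A) E i <= ((\sum_(i in A) E i) / #|A|%:R) ^+ #|A|.
Proof. by move=> H; have [] := leif_AGM H. Qed.

Lemma fib_a (c : X -> nat) :
  \prod_y ((mf (h y))%:R * (c y)%:R) <=
  \prod_y ((\sum_(z | h z == h y) c z)%N%:R : rat).
Proof.
rewrite (partition_big h predT) // [X in _ <= X](partition_big h predT) //=.
apply: ler_prod => a _; apply/andP; split.
  by apply: prodr_ge0 => y _; rewrite mulr_ge0.
set A := [pred z | h z == a].
rewrite (eq_bigr (fun y => (mf a)%:R * (c y)%:R)); last by move=> y /eqP ->.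
rewrite [X in _ <= X](eq_bigr (fun y => ((\sum_(z in A) c z)%N)%:R)); last first.
  by move=> y /eqP ->.
rewrite (eq_bigl (fun y => y \in A)) //.
rewrite [X in _ <= X](eq_bigl (fun y => y \in A)) // prodr_const.
apply: le_trans (AGM_le _) _; first by move=> y _; rewrite mulr_ge0.
rewrite -mulr_sumr -natr_sum.
have -> : #|A| = mf a by [].
case: (posnP (mf a)) => [-> | hm]; first by rewrite !expr0.
by rewrite [_ * _ / _]mulrC mulKf // pnatr_eq0 -lt0n.
Qed.

Lemma mf_gt0 y : (0 < mf (h y))%N.
Proof. by apply/card_gt0P; exists y; rewrite inE /=. Qed.

Lemma fib_b (hX : (0 < #|X|)%N) :
  (#|X|%:R ^+ #|X| : rat) <= #|B|%:R ^+ #|X| * \prod_y (mf (h y))%:R.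
Proof.
have Ppos : 0 < \prod_y ((mf (h y))%:R : rat).
  by apply: prodr_gt0 => y _; rewrite ltr0n mf_gt0.
have Npos : 0 < (#|X|%:R : rat) ^+ #|X| by rewrite exprn_gt0 // ltr0n.
have Ege0 : {in predT, forall z, 0 <= ((mf (h z))%:R : rat)^-1}.
  by move=> z _; rewrite invr_ge0.
have H : \prod_i ((mf (h i))%:R : rat)^-1 <=
   ((\sum_i ((mf (h i))%:R : rat)^-1) / #|X|%:R) ^+ #|X| := AGM_le Ege0.
have hs : \sum_i ((mf (h i))%:R : rat)^-1 <= #|B|%:R.
  rewrite (partition_big h predT) //=.
  apply: (@le_trans _ _ (\sum_(a : B) 1)); last by rewrite sumr_const.
  apply: ler_sum => a _.
  rewrite (eq_bigr (fun _ => ((mf a)%:R : rat)^-1)); last by move=> z /eqP ->.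
  rewrite (eq_bigl (fun z => z \in [pred z | h z == a])) // sumr_const.
  have -> : #|[pred z | h z == a]| = mf a by [].
  case: (posnP (mf a)) => [-> | hm]; first by rewrite mulr0n ler01.
  by rewrite -[X in X <= 1]mulr_natr mulVf // pnatr_eq0 -lt0n.
have Ninv : 0 <= (#|X|%:R : rat)^-1 by rewrite invr_ge0.
have H2 : (\prod_i ((mf (h i))%:R : rat))^-1 <= #|B|%:R^+#|X| / #|X|%:R^+#|X|.
  rewrite -prodfV -expr_div_n; apply: le_trans H _.
  apply: lerXn2r; rewrite ?inE ?nnegrE ?mulr_ge0 ?sumr_ge0 //.
  exact: ler_wpM2r.
rewrite ler_pdivlMr // ler_pdivrMl // in H2.
by rewrite mulrC.
Qed.

Lemma step (c : X -> nat) (hX : (0 < #|X|)%N) :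
  (#|X|%:R ^+ #|X| : rat) * \prod_z (c z)%:R <=
  #|B|%:R ^+ #|X| * \prod_y ((\sum_(z | h z == h y) c z)%N%:R).
Proof.
apply: le_trans (ler_wpM2r _ (fib_b hX)) _.
  by apply: prodr_ge0 => z _; rewrite ler0n.
rewrite -mulrA -big_split /=; apply: ler_wpM2l; last exact: fib_a.
by rewrite exprn_ge0 // ler0n.
Qed.

End Ineq.

Unset Implicit Arguments. Set Strict Implicit.
Theorem lemma2p1 (n : nat) (X : finType) (A : 'I_n -> finType)
  (f : forall i : 'I_n, X -> A i)
  (hX : (0 < #|X|)%N) (hA : forall i : 'I_n, (0 < #|A i|)%N) :
  ((#|X| ^ n.+1)%:R / (\prod_(i < n) #|A i|)%:R : rat)
    <= (#|chain_tuples f|)%:R.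
Proof.
pose g k (x y : X) : bool :=
  if (insub k : option 'I_n) is Some i then f i x == f i y else true.
have Hch : #|chain_tuples f| = (\sum_y cnt g n y)%N.
  rewrite /cnt exchange_big /= -sum1_card big_mkcond /=.
  apply: eq_bigr => x _.
  rewrite (eq_bigr (fun y => ((y == x (inord n)) && chainP g x : nat))); last first.
    by move=> y _; rewrite eq_sym.
  rewrite (sum_eq1 (x (inord n)) (fun _ => chainP g x)) /=.
  have -> : (x \in chain_tuples f) = chainP g x.
    rewrite inE /chainP; apply: eq_forallb => i.
    rewrite /g valK.
    have e1 : widen_ord (leqnSn n) i = inord i.
      by apply/val_inj; rewrite /= inordK // ltnS ltnW.
    have e2 : lift ord0 i = inord i.+1.
      apply/val_inj; rewrite /= /bump /= inordK ?add1n // ltnS; exact: ltn_ord.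
    by rewrite e1 e2.
  by case: (chainP g x).
have claim : forall k, (k <= n)%N ->
  (#|X|%:R ^+ k) ^+ #|X| <= (\prod_(i : 'I_n | (i < k)%N) (#|A i|%:R : rat)) ^+ #|X|
                            * \prod_y (cnt g k y)%:R.
  elim => [_ | k IH hk].
    rewrite expr1n big1 // expr1n mul1r big1 // => y _.
    by rewrite cnt0.
  have hk' : (k < n)%N by [].
  set i := Ordinal hk'.
  have Hc y : cnt g k.+1 y = (\sum_(z | f i z == f i y) cnt g k z)%N.
    rewrite cntS; apply: eq_bigl => z; rewrite /g.
    case: insubP => [j _ hj|]; last by rewrite hk'.
    by have -> : j = i by apply: val_inj.
  have -> : \prod_y ((cnt g k.+1 y)%:R : rat) =
            \prod_y ((\sum_(z | f i z == f i y) cnt g k z)%N%:R).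
    by apply: eq_bigr => y _; rewrite Hc.
  have -> : \prod_(j : 'I_n | (j < k.+1)%N) (#|A j|%:R : rat) =
            (\prod_(j : 'I_n | (j < k)%N) #|A j|%:R) * #|A i|%:R.
    rewrite (bigD1 i) //= mulrC; congr (_ * _); apply: eq_bigl => j.
    by rewrite ltnS ltn_neqAle andbC -(inj_eq val_inj).
  have St := step (f i) (cnt g k) hX.
  have IH' := IH (ltnW hk).
  rewrite exprS !exprMn.
  apply: le_trans (ler_wpM2l _ IH') _; first by rewrite exprn_ge0 // ler0n.
  rewrite mulrCA -!mulrA; apply: ler_wpM2l.
    by rewrite exprn_ge0 // prodr_ge0 // => j _; rewrite ler0n.
  exact: St.
have Hn := claim n (leqnn n).
have Ep : \prod_(i : 'I_n | (i < n)%N) (#|A i|%:R : rat) = \prod_(i < n) #|A i|%:R.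
  by apply: eq_bigl => j; rewrite ltn_ord.
rewrite Ep in Hn.
have Npos : (0 : rat) < #|X|%:R by rewrite ltr0n.
have Ppos : (0 : rat) < \prod_(j < n) #|A j|%:R.
  by apply: prodr_gt0 => j _; rewrite ltr0n.
have Cge0 y : (0 : rat) <= (cnt g n y)%:R by rewrite ler0n.
have Hag : \prod_(y in predT) ((cnt g n y)%:R : rat) <=
    ((\sum_(y in predT) (cnt g n y)%:R) / #|X|%:R) ^+ #|X|.
  by apply: AGM_le => y _; exact: Cge0.
rewrite -natr_sum -Hch in Hag.
have H3 := le_trans Hn (ler_wpM2l (exprn_ge0 _ (ltW Ppos)) Hag).
rewrite -exprMn in H3.
rewrite ler_pXn2r // ?inE ?nnegrE ?exprn_ge0 ?mulr_ge0 ?ler0n ?invr_ge0 ?(ltW Ppos) ?(ltW Npos) // in H3.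
rewrite mulrA ler_pdivlMr // in H3.
rewrite natrX natr_prod ler_pdivrMr // exprSr mulrC.
by rewrite mulrC [X in _ <= X]mulrC.
Qed.
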